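(* Let $n \ge 1$ and let $A$ be a simple cusp algebra of codimension $n+1$. Then $A$ has a primitive $\pi$ such that the Taylor coefficients satisfy $\hat{\pi}(2k) = 0$ for all $2 \le k \le n$. Moreover, such $\pi$ is unique up to $O(z^{2n+2})$: if $\pi$ and $\chi$ are two primitives of $A$ with $\hat\pi(2k) = \hat\chi(2k) = 0$ for all $2 \le k \le n$, then $\chi - \pi \in z^{2n+2} O(\mathbb{D})$.
   Context: $\mathbb{D}$ is the open unit disk, $O(\mathbb{D})$ the holomorphic functions on it; $\hat f(k)$ denotes the $k$-th Taylor coefficient of $f$ at $0$. A cusp algebra is a unital subalgebra $A \subseteq O(\mathbb{D})$ with $\dim(O(\mathbb{D})/A) < \infty$ and $z^m O(\mathbb{D}) \subseteq A$ for some $m \ge 2$; its codimension is $\dim(O(\mathbb{D})/A)$. Its contact is $\max\{n : f^{(j)}(0)=0\ \forall f\in A,\ 1\le j\le n\}$, and $A$ is simple if its contact is $1$. A primitive for a simple cusp algebra $A$ is a function $\pi \in A$ with $\pi(0)=0$ and $\pi''(0)=2$. *)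

(* Defs.v *)
From Stdlib Require Import Reals Arith.
Open Scope R_scope.

Definition Cplx : Type := (R * R)%type.
Definition C0 : Cplx := (0, 0).
Definition C1 : Cplx := (1, 0).
Definition Cadd (x y : Cplx) : Cplx := (fst x + fst y, snd x + snd y).
Definition Copp (x : Cplx) : Cplx := (- fst x, - snd x).
Definition Cmul (x y : Cplx) : Cplx :=
  (fst x * fst y - snd x * snd y, fst x * snd y + snd x * fst y).
Definition Cnorm (x : Cplx) : R := sqrt (fst x * fst x + snd x * snd x).
Definition RtoC (r : R) : Cplx := (r, 0).

Fixpoint Csum (n : nat) (f : nat -> Cplx) : Cplx :=
  match n with
  | O => C0
  | S m => Cadd (Csum m f) (f m)
  end.

(* A function on the disk, given by its Taylor coefficients at 0:
   f = sum_k (f k) z^k, i.e. f k = \hat f(k). *)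
Definition series : Type := nat -> Cplx.

(* The power series has radius of convergence >= 1, i.e. it defines an
   element of O(D); this identifies O(D) with such sequences. *)
Definition holo (f : series) : Prop :=
  forall r : R, 0 <= r < 1 ->
    exists M : R, forall k : nat, Cnorm (f k) * r ^ k <= M.

Definition sone : series := fun k => match k with O => C1 | _ => C0 end.
Definition sadd (f g : series) : series := fun k => Cadd (f k) (g k).
Definition ssub (f g : series) : series := fun k => Cadd (f k) (Copp (g k)).
Definition sscal (c : Cplx) (f : series) : series := fun k => Cmul c (f k).
Definition smul (f g : series) : series :=
  fun k => Csum (S k) (fun j => Cmul (f j) (g (k - j)%nat)).
Definition zpow_mul (m : nat) (h : series) : series :=
  fun k => if Nat.ltb k m then C0 else h (k - m)%nat.
Definition lincomb (d : nat) (c : nat -> Cplx) (g : nat -> series) : series :=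
  fun k => Csum d (fun i => Cmul (c i) (g i k)).

Definition deriv0 (f : series) (j : nat) : Cplx := Cmul (RtoC (INR (fact j))) (f j).

Definition unital_subalgebra (A : series -> Prop) : Prop :=
  (forall f, A f -> holo f) /\
  A sone /\
  (forall f g, A f -> A g -> A (sadd f g)) /\
  (forall c f, A f -> A (sscal c f)) /\
  (forall f g, A f -> A g -> A (smul f g)).

(* dim (O(D)/A) = d : there are g_0,...,g_{d-1} in O(D) whose classes form a
   basis of the quotient O(D)/A. *)
Definition has_codim (A : series -> Prop) (d : nat) : Prop :=
  exists g : nat -> series,
    (forall i, (i < d)%nat -> holo (g i)) /\
    (forall f, holo f -> exists c : nat -> Cplx, A (ssub f (lincomb d c g))) /\
    (forall c : nat -> Cplx, A (lincomb d c g) -> forall i, (i < d)%nat -> c i = C0).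

Definition finite_codim (A : series -> Prop) : Prop := exists d, has_codim A d.

Definition cusp_algebra (A : series -> Prop) : Prop :=
  unital_subalgebra A /\ finite_codim A /\
  exists m : nat, (2 <= m)%nat /\ forall h, holo h -> A (zpow_mul m h).

Definition contact_cond (A : series -> Prop) (n : nat) : Prop :=
  forall f, A f -> forall j, (1 <= j <= n)%nat -> deriv0 f j = C0.
Definition has_contact (A : series -> Prop) (c : nat) : Prop :=
  contact_cond A c /\ forall n, contact_cond A n -> (n <= c)%nat.
Definition is_simple (A : series -> Prop) : Prop := has_contact A 1.

Definition is_primitive (A : series -> Prop) (p : series) : Prop :=
  A p /\ p 0%nat = C0 /\ deriv0 p 2 = RtoC 2.

(* Main.v *)
Require Import Defs.
From Stdlib Require Import Reals Lra Lia Arith Bool Classical FunctionalExtensionality IndefiniteDescription.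
From Coquelicot Require Complex.
Open Scope R_scope.
Local Notation C1 := Defs.C1.

Lemma Cring_theory : ring_theory C0 C1 Cadd Cmul (fun x y => Cadd x (Copp y)) Copp (@eq Cplx).
Proof.
  constructor; intros; repeat match goal with x : Cplx |- _ => destruct x end;
  unfold Cadd, Cmul, Copp, C0, C1; simpl; f_equal; ring.
Qed.
Add Ring Cring : Cring_theory.

Lemma Cnorm_Cmod (x : Cplx) : Cnorm x = Complex.Cmod x.
Proof. destruct x; unfold Cnorm, Complex.Cmod; simpl; f_equal; ring. Qed.

Lemma Cnorm_ge0 x : 0 <= Cnorm x.
Proof. unfold Cnorm; apply sqrt_pos. Qed.

Lemma Cnorm_add x y : Cnorm (Cadd x y) <= Cnorm x + Cnorm y.
Proof. rewrite !Cnorm_Cmod. apply (Complex.Cmod_triangle x y). Qed.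

Lemma Cnorm_opp x : Cnorm (Copp x) = Cnorm x.
Proof. rewrite !Cnorm_Cmod. apply (Complex.Cmod_opp x). Qed.

Lemma Cnorm_mul x y : Cnorm (Cmul x y) = Cnorm x * Cnorm y.
Proof. rewrite !Cnorm_Cmod. apply (Complex.Cmod_mult x y). Qed.

Lemma Cnorm_C0 : Cnorm C0 = 0.
Proof. unfold Cnorm, C0; simpl. replace (0*0+0*0) with 0 by ring. apply sqrt_0. Qed.

Definition Cinv (x : Cplx) : Cplx :=
  (fst x / (fst x * fst x + snd x * snd x), - snd x / (fst x * fst x + snd x * snd x)).

Lemma Cinv_l x : x <> C0 -> Cmul (Cinv x) x = C1.
Proof.
  destruct x as [a b]; intro H.
  assert (Hs : a * a + b * b <> 0).
  { intro E. apply H. unfold C0. assert (a = 0) by nra. assert (b = 0) by nra. subst; auto. }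
  unfold Cmul, Cinv, C1; simpl; f_equal; field; auto.
Qed.

Lemma Cmul_neq0 x y : x <> C0 -> y <> C0 -> Cmul x y <> C0.
Proof.
  intros Hx Hy E.
  assert (Cmul (Cmul (Cinv x) x) y = C0) by (replace (Cmul (Cmul (Cinv x) x) y) with (Cmul (Cinv x) (Cmul x y)) by ring; rewrite E; ring).
  rewrite Cinv_l in H by auto. apply Hy. rewrite <- H; ring.
Qed.

Lemma C1_neq_C0 : C1 <> C0.
Proof. unfold C1, C0; intro E; injection E; lra. Qed.

Lemma deriv0_1 f : deriv0 f 1 = f 1%nat.
Proof. unfold deriv0, RtoC, Cmul; destruct (f 1%nat); simpl; f_equal; ring. Qed.

Lemma deriv0_2 f : deriv0 f 2 = RtoC 2 <-> f 2%nat = C1.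
Proof.
  unfold deriv0, RtoC, Cmul, C1; destruct (f 2%nat) as [a b]; simpl.
  split; intro E.
  - injection E; intros; f_equal; lra.
  - injection E; intros; subst; f_equal; ring.
Qed.

Lemma deriv0_2_0 f : deriv0 f 2 = C0 -> f 2%nat = C0.
Proof.
  unfold deriv0, RtoC, Cmul, C0; destruct (f 2%nat) as [a b]; simpl.
  intro E; injection E; intros; f_equal; lra.
Qed.

Lemma Csum_ext n F G : (forall i, (i < n)%nat -> F i = G i) -> Csum n F = Csum n G.
Proof. induction n; simpl; intros; auto. rewrite IHn by auto. rewrite H by lia. auto. Qed.

Lemma Csum_zero n F : (forall i, (i < n)%nat -> F i = C0) -> Csum n F = C0.
Proof. induction n; simpl; intros; auto. rewrite IHn by auto. rewrite H by lia. ring. Qed.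

Lemma Csum_add n F G : Csum n (fun i => Cadd (F i) (G i)) = Cadd (Csum n F) (Csum n G).
Proof. induction n; simpl; [ring|]. rewrite IHn; ring. Qed.

Lemma Csum_scal n c F : Csum n (fun i => Cmul c (F i)) = Cmul c (Csum n F).
Proof. induction n; simpl; [ring|]. rewrite IHn; ring. Qed.

Lemma Csum_opp n F : Csum n (fun i => Copp (F i)) = Copp (Csum n F).
Proof. induction n; simpl; [ring|]. rewrite IHn; ring. Qed.

Lemma Csum_single n F i0 : (i0 < n)%nat -> (forall i, (i < n)%nat -> i <> i0 -> F i = C0) ->
  Csum n F = F i0.
Proof.
  induction n; intros H1 H2; [lia|]. simpl.
  destruct (Nat.eq_dec i0 n).
  - subst. rewrite Csum_zero. ring. intros; apply H2; lia.
  - rewrite IHn by (auto; lia). rewrite (H2 n) by lia. ring.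
Qed.

Definition skip (i0 i : nat) : nat := if Nat.ltb i i0 then i else S i.

Lemma Csum_skip m F i0 : (i0 <= m)%nat ->
  Csum (S m) F = Cadd (F i0) (Csum m (fun i => F (skip i0 i))).
Proof.
  induction m; intros H.
  - assert (i0 = 0%nat) by lia; subst; simpl; ring.
  - destruct (Nat.eq_dec i0 (S m)).
    + subst. change (Csum (S (S m)) F) with (Cadd (Csum (S m) F) (F (S m))).
      rewrite (Csum_ext (S m) (fun i => F (skip (S m) i)) F).
      ring. intros; unfold skip; destruct (Nat.ltb_spec i (S m)); auto; lia.
    + change (Csum (S (S m)) F) with (Cadd (Csum (S m) F) (F (S m))).
      rewrite IHm by lia.
      change (Csum (S m) (fun i => F (skip i0 i))) with (Cadd (Csum m (fun i => F (skip i0 i))) (F (skip i0 m))).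
      assert (skip i0 m = S m) as ->. { unfold skip; destruct (Nat.ltb_spec m i0); lia. }
      ring.
Qed.

Definition unskip (i0 i : nat) : nat := if Nat.ltb i i0 then i else pred i.

Lemma skip_neq i0 i : skip i0 i <> i0.
Proof. unfold skip; destruct (Nat.ltb_spec i i0); lia. Qed.
Lemma unskip_skip i0 i : unskip i0 (skip i0 i) = i.
Proof. unfold skip, unskip; destruct (Nat.ltb_spec i i0); destruct (Nat.ltb_spec i i0);
  try destruct (Nat.ltb_spec (S i) i0); try destruct (Nat.ltb_spec i i0); lia. Qed.
Lemma skip_lt i0 i m : (i < m)%nat -> (skip i0 i < S m)%nat.
Proof. unfold skip; destruct (Nat.ltb_spec i i0); lia. Qed.

Lemma Csum_elim m G H x :
  Cadd (Cmul (Copp (Csum m G)) x) (Csum m H) = Csum m (fun i => Cadd (H i) (Copp (Cmul (G i) x))).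
Proof. induction m; simpl; [ring|]. rewrite <- IHm. ring. Qed.

Lemma dep : forall k m (v : nat -> nat -> Cplx), (k < m)%nat ->
  exists c : nat -> Cplx, (exists i, (i < m)%nat /\ c i <> C0) /\
    forall l, (l < k)%nat -> Csum m (fun i => Cmul (c i) (v i l)) = C0.
Proof.
  induction k as [|k IH]; intros m v Hkm.
  - exists (fun _ => C1). split; [exists 0%nat; split; [lia|apply C1_neq_C0]|]. intros; lia.
  - destruct (classic (forall i, (i < m)%nat -> v i k = C0)) as [Hall|Hex].
    + destruct (IH m v ltac:(lia)) as [c [Hc Hs]]. exists c. split; auto.
      intros l Hl. destruct (Nat.eq_dec l k).
      * subst. apply Csum_zero. intros i Hi. rewrite Hall by auto. ring.
      * apply Hs; lia.
    + apply not_all_ex_not in Hex. destruct Hex as [i0 Hi0].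
      apply imply_to_and in Hi0. destruct Hi0 as [Hi0m Hv].
      destruct m as [|m']; [lia|].
      set (w := fun i l => Cadd (Cmul (v i0 k) (v (skip i0 i) l)) (Copp (Cmul (v (skip i0 i) k) (v i0 l)))).
      destruct (IH m' w ltac:(lia)) as [c' [[i1 [Hi1 Hc1]] Hs]].
      exists (fun i => if Nat.eqb i i0 then Copp (Csum m' (fun i' => Cmul (c' i') (v (skip i0 i') k)))
                  else Cmul (c' (unskip i0 i)) (v i0 k)).
      split.
      * exists (skip i0 i1). split; [apply skip_lt; auto|]. cbv beta.
        destruct (Nat.eqb_spec (skip i0 i1) i0) as [E|_]; [exfalso; exact (skip_neq _ _ E)|].
        rewrite unskip_skip. apply Cmul_neq0; auto.
      * intros l Hl.
        rewrite (Csum_skip m' _ i0) by lia.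
        rewrite Nat.eqb_refl.
        set (S0 := Csum m' (fun i' => Cmul (c' i') (v (skip i0 i') k))).
        rewrite (Csum_ext m' _ (fun i => Cmul (Cmul (c' i) (v i0 k)) (v (skip i0 i) l))).
        2:{ intros i Hi. cbv beta. destruct (Nat.eqb_spec (skip i0 i) i0) as [E|_]; [exfalso; exact (skip_neq _ _ E)|].
            rewrite unskip_skip. auto. }
        unfold S0. rewrite Csum_elim.
        rewrite (Csum_ext m' _ (fun i => Cmul (c' i) (w i l))).
        2:{ intros i Hi. unfold w. ring. }
        destruct (Nat.eq_dec l k).
        -- subst. apply Csum_zero. intros i Hi. unfold w. ring.
        -- apply Hs; lia.
Qed.

Definition szero : series := fun _ => C0.
Definition shift (N : nat) (f : series) : series := fun k => f (k + N)%nat.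
Fixpoint spow (f : series) (a : nat) : series :=
  match a with O => sone | S a' => smul f (spow f a') end.

Lemma pow_le1 r k : 0 <= r < 1 -> r ^ k <= 1.
Proof. intros H. rewrite <- (pow1 k). apply pow_incr. lra. Qed.

Lemma holo_sadd f g : holo f -> holo g -> holo (sadd f g).
Proof.
  intros Hf Hg r Hr. destruct (Hf r Hr) as [M1 H1]. destruct (Hg r Hr) as [M2 H2].
  exists (M1 + M2). intro k. unfold sadd. specialize (H1 k). specialize (H2 k).
  pose proof (Cnorm_add (f k) (g k)). pose proof (pow_le r k ltac:(lra)).
  apply Rle_trans with ((Cnorm (f k) + Cnorm (g k)) * r ^ k).
  - apply Rmult_le_compat_r; auto.
  - lra.
Qed.

Lemma holo_ssub f g : holo f -> holo g -> holo (ssub f g).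
Proof.
  intros Hf Hg r Hr. destruct (Hf r Hr) as [M1 H1]. destruct (Hg r Hr) as [M2 H2].
  exists (M1 + M2). intro k. unfold ssub. specialize (H1 k). specialize (H2 k).
  pose proof (Cnorm_add (f k) (Copp (g k))). rewrite Cnorm_opp in H. pose proof (pow_le r k ltac:(lra)).
  apply Rle_trans with ((Cnorm (f k) + Cnorm (g k)) * r ^ k).
  - apply Rmult_le_compat_r; auto.
  - lra.
Qed.

Fixpoint Rs (f : series) (N : nat) : R :=
  match N with O => 0 | S N' => Rs f N' + Cnorm (f N') end.

Lemma Rs_ge0 f N : 0 <= Rs f N.
Proof. induction N; simpl; [lra|]. pose proof (Cnorm_ge0 (f N)); lra. Qed.

Lemma Rs_le f N k : (k < N)%nat -> Cnorm (f k) <= Rs f N.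
Proof.
  induction N; intros H; [lia|]. simpl. destruct (Nat.eq_dec k N).
  - subst. pose proof (Rs_ge0 f N); lra.
  - pose proof (IHN ltac:(lia)). pose proof (Cnorm_ge0 (f N)); lra.
Qed.

Lemma holo_fin f N : (forall k, (N <= k)%nat -> f k = C0) -> holo f.
Proof.
  intros Hf r Hr. exists (Rs f N). intro k.
  pose proof (pow_le1 r k Hr). pose proof (pow_le r k ltac:(lra)).
  pose proof (Cnorm_ge0 (f k)).
  destruct (Nat.lt_ge_cases k N).
  - pose proof (Rs_le f N k H2). nra.
  - rewrite Hf by auto. rewrite Cnorm_C0. pose proof (Rs_ge0 f N). nra.
Qed.

Lemma holo_shift N f : holo f -> holo (shift N f).
Proof.
  intros Hf r Hr. set (r' := (1 + r) / 2).
  destruct (Hf r' ltac:(unfold r'; lra)) as [M H].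
  assert (Hp : 0 < r' ^ N) by (apply pow_lt; unfold r'; lra).
  exists (M / r' ^ N). intro k. unfold shift.
  specialize (H (k + N)%nat). rewrite pow_add in H.
  pose proof (Cnorm_ge0 (f (k + N)%nat)).
  assert (Cnorm (f (k + N)%nat) * r ^ k <= Cnorm (f (k + N)%nat) * r' ^ k).
  { apply Rmult_le_compat_l; auto. apply pow_incr. unfold r'; lra. }
  apply Rle_trans with (Cnorm (f (k + N)%nat) * r' ^ k); auto.
  apply Rmult_le_reg_r with (r' ^ N); auto.
  replace (M / r' ^ N * r' ^ N) with M by (field; lra). rewrite Rmult_assoc; exact H.
Qed.

Lemma zpow_shift N f : (forall k, (k < N)%nat -> f k = C0) -> f = zpow_mul N (shift N f).
Proof.
  intros H. apply functional_extensionality. intro k. unfold zpow_mul, shift.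
  destruct (Nat.ltb_spec k N); auto. f_equal. lia.
Qed.

Lemma smul_order f g s t :
  (forall i, (i < s)%nat -> f i = C0) -> (forall i, (i < t)%nat -> g i = C0) ->
  (forall k, (k < s + t)%nat -> smul f g k = C0) /\ smul f g (s + t)%nat = Cmul (f s) (g t).
Proof.
  intros Hf Hg. split.
  - intros k Hk. unfold smul. apply Csum_zero. intros i Hi.
    destruct (Nat.lt_ge_cases i s).
    + rewrite Hf by auto. ring.
    + rewrite (Hg (k - i)%nat) by lia. ring.
  - unfold smul. rewrite (Csum_single _ _ s).
    2: lia.
    2:{ intros i Hi Hne. destruct (Nat.lt_ge_cases i s).
      - rewrite Hf by auto; ring.
      - rewrite (Hg (s + t - i)%nat) by lia; ring. }
    replace (s + t - s)%nat with t by lia. auto.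
Qed.

Lemma spow_order f a : (forall i, (i < 2)%nat -> f i = C0) -> f 2%nat = C1 ->
  (forall i, (i < 2 * a)%nat -> spow f a i = C0) /\ spow f a (2 * a)%nat = C1.
Proof.
  intros H0 H2. induction a as [|a IH].
  - split; [intros; lia|]. reflexivity.
  - destruct IH as [IH1 IH2].
    assert (E : (2 * S a = 2 + 2 * a)%nat) by lia. rewrite E.
    change (spow f (S a)) with (smul f (spow f a)).
    destruct (smul_order f (spow f a) 2 (2 * a) H0 IH1) as [E1 E2].
    split; [exact E1|].
    rewrite E2, H2, IH2. ring.
Qed.

Lemma A_ssub A f g : unital_subalgebra A -> A f -> A g -> A (ssub f g).
Proof.
  intros [_ [_ [Had [Hsc _]]]] Hf Hg.
  replace (ssub f g) with (sadd f (sscal (Copp C1) g)).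
  - apply Had; auto.
  - apply functional_extensionality; intro k; unfold sadd, ssub, sscal; ring.
Qed.

Lemma A_zero A : unital_subalgebra A -> A szero.
Proof.
  intros [_ [H1 [_ [Hsc _]]]].
  replace szero with (sscal C0 sone). apply Hsc; auto.
  apply functional_extensionality; intro k; unfold szero, sscal; ring.
Qed.

Lemma A_lincomb A d c g : unital_subalgebra A -> (forall i, (i < d)%nat -> A (g i)) -> A (lincomb d c g).
Proof.
  intros HA Hg. induction d.
  - replace (lincomb 0 c g) with szero by reflexivity. apply A_zero; auto.
  - destruct HA as [_ [_ [Had [Hsc _]]]].
    change (lincomb (S d) c g) with (sadd (lincomb d c g) (sscal (c d) (g d))).
    apply Had; [apply IHd; auto | apply Hsc; auto].
Qed.

Lemma A_spow A f a : unital_subalgebra A -> A f -> A (spow f a).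
Proof.
  intros HA Hf. induction a; simpl.
  - apply HA.
  - destruct HA as [_ [_ [_ [_ Hm]]]]. apply Hm; auto.
Qed.

Definition P (j : nat) (Q : nat -> Cplx) : series :=
  fun k => if Nat.odd k && (k <? 2 * j)%nat then Q k else C0.

Lemma ut A pi e j : unital_subalgebra A -> A pi -> (forall i, (i < 2)%nat -> pi i = C0) -> pi 2%nat = C1 ->
  A e -> (forall i, (i < 2 * j + 1)%nat -> e i = C0) -> e (2 * j + 1)%nat = C1 ->
  forall t, (Nat.odd t && (t <? 2 * j)%nat) = false ->
  exists u, A u /\ (forall i, (i < t)%nat -> u i = C0) /\ u t = C1.
Proof.
  intros HA Api pi0 pi2 Ae e0 e1 t Ht.
  destruct (Nat.Even_or_Odd t) as [[a Ha]|[a Ha]].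
  - subst t. exists (spow pi a). split; [apply A_spow; auto|].
    apply spow_order; auto.
  - assert (Nat.odd t = true) by (apply Nat.odd_spec; exists a; auto).
    rewrite H in Ht. simpl in Ht. apply Nat.ltb_ge in Ht.
    destruct (spow_order pi (a - j) pi0 pi2) as [S1 S2].
    destruct (smul_order (spow pi (a - j)) e (2 * (a - j)) (2 * j + 1) S1 e0) as [E1 E2].
    exists (smul (spow pi (a - j)) e). split.
    + apply (proj2 (proj2 (proj2 (proj2 HA)))); auto. apply A_spow; auto.
    + assert (Et : t = (2 * (a - j) + (2 * j + 1))%nat) by lia.
      rewrite Et. split; auto. rewrite E2, S2, e1. ring.
Qed.

Lemma reduce A j :
  (forall t, (Nat.odd t && (t <? 2 * j)%nat) = false ->
     exists u, A u /\ (forall i, (i < t)%nat -> u i = C0) /\ u t = C1) ->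
  unital_subalgebra A ->
  forall t g, exists Q a, A a /\ forall i, (i < t)%nat -> ssub g (sadd a (P j Q)) i = C0.
Proof.
  intros Hut HA. induction t as [|t IH]; intros g.
  - exists (fun _ => C0), szero. split; [apply A_zero; auto|]. intros; lia.
  - destruct (IH g) as [Q [a [Aa Hz]]].
    set (c := ssub g (sadd a (P j Q)) t).
    destruct (Nat.odd t && (t <? 2 * j)%nat) eqn:Hc.
    + exists (fun x => if Nat.eqb x t then Cadd (Q t) c else Q x), a. split; auto.
      intros i Hi. destruct (Nat.eq_dec i t).
      * subst i. unfold c, ssub, sadd, P. rewrite Hc, Nat.eqb_refl. ring.
      * rewrite <- (Hz i) by lia. unfold ssub, sadd, P.
        destruct (Nat.odd i && (i <? 2 * j)%nat); auto.
        destruct (Nat.eqb_spec i t); [lia|auto].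
    + destruct (Hut t Hc) as [u [Au [u0 u1]]].
      exists Q, (sadd a (sscal c u)). split.
      * destruct HA as [_ [_ [Had [Hsc _]]]]. apply Had; auto.
      * intros i Hi. destruct (Nat.eq_dec i t).
        -- subst i. unfold c, ssub, sadd, sscal. unfold ssub, sadd in c. rewrite u1. ring.
        -- pose proof (Hz i ltac:(lia)). unfold ssub, sadd, sscal in *. rewrite u0 by lia.
           transitivity (Cadd (g i) (Copp (Cadd (a i) (P j Q i)))); [ring|exact H].
Qed.

Lemma holo_P j Q : holo (P j Q).
Proof.
  apply (holo_fin _ (2 * j)). intros k Hk. unfold P.
  destruct (Nat.ltb_spec k (2 * j)); [lia|]. rewrite andb_false_r. auto.
Qed.

Lemma span A j m :
  (forall t, (Nat.odd t && (t <? 2 * j)%nat) = false ->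
     exists u, A u /\ (forall i, (i < t)%nat -> u i = C0) /\ u t = C1) ->
  unital_subalgebra A -> (forall h, holo h -> A (zpow_mul m h)) ->
  forall g, holo g -> exists Q, A (ssub g (P j Q)).
Proof.
  intros Hut HA Hm g Hg.
  destruct (reduce A j Hut HA m g) as [Q [a [Aa Hz]]].
  exists Q.
  set (r := ssub g (sadd a (P j Q))).
  assert (Ar : A r).
  { rewrite (zpow_shift m r Hz). apply Hm. apply holo_shift. unfold r.
    apply holo_ssub; auto. apply holo_sadd; [apply HA; auto | apply holo_P]. }
  replace (ssub g (P j Q)) with (sadd r a).
  - apply HA; auto.
  - apply functional_extensionality; intro k. unfold r, sadd, ssub. ring.
Qed.

Lemma gap n A pi j f : cusp_algebra A -> has_codim A (S n) ->
  A pi -> (forall i, (i < 2)%nat -> pi i = C0) -> pi 2%nat = C1 ->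
  A f -> (j <= n)%nat -> (forall i, (i < 2 * j + 1)%nat -> f i = C0) -> f (2 * j + 1)%nat = C0.
Proof.
  intros [HA [_ [m [Hm2 Hm]]]] [g [Hg [_ Hind]]] Api pi0 pi2 Af Hjn Hf0.
  apply NNPP. intro Hne.
  set (e := sscal (Cinv (f (2 * j + 1)%nat)) f).
  assert (Ae : A e) by (apply (proj1 (proj2 (proj2 (proj2 HA)))); auto).
  assert (e0 : forall i, (i < 2 * j + 1)%nat -> e i = C0).
  { intros i Hi. unfold e, sscal. rewrite (Hf0 i Hi). ring. }
  assert (e1 : e (2 * j + 1)%nat = C1) by (unfold e, sscal; apply Cinv_l; auto).
  pose proof (ut A pi e j HA Api pi0 pi2 Ae e0 e1) as Hut.
  assert (HQ : forall i, exists Q, (i < S n)%nat -> A (ssub (g i) (P j Q))).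
  { intro i. destruct (Nat.lt_ge_cases i (S n)).
    - destruct (span A j m Hut HA Hm (g i) (Hg i H)) as [Q HQ]. exists Q; auto.
    - exists (fun _ => C0). intros; lia. }
  apply functional_choice in HQ. destruct HQ as [Qf HQf].
  destruct (dep j (S n) (fun i l => Qf i (2 * l + 1)%nat) ltac:(lia)) as [c [[i1 [Hi1 Hc1]] Hs]].
  apply Hc1. apply (Hind c); auto.
  replace (lincomb (S n) c g) with (lincomb (S n) c (fun i => ssub (g i) (P j (Qf i)))).
  - apply A_lincomb; auto.
  - apply functional_extensionality; intro k. unfold lincomb, ssub.
    assert (E : Csum (S n) (fun i => Cmul (c i) (P j (Qf i) k)) = C0).
    { unfold P. destruct (Nat.odd k && (k <? 2 * j)%nat) eqn:Hk.
      - apply andb_true_iff in Hk. destruct Hk as [Ho Hl].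
        apply Nat.odd_spec in Ho. destruct Ho as [l Hl']. apply Nat.ltb_lt in Hl.
        subst k. apply (Hs l). lia.
      - apply Csum_zero. intros; ring. }
    transitivity (Cadd (Csum (S n) (fun i => Cmul (c i) (Cadd (g i k) (Copp (P j (Qf i) k)))))
                       (Csum (S n) (fun i => Cmul (c i) (P j (Qf i) k)))).
    + rewrite E. ring.
    + rewrite <- Csum_add. apply Csum_ext. intros; ring.
Qed.

Lemma pi0_exists A : unital_subalgebra A -> is_simple A ->
  exists p, A p /\ p 0%nat = C0 /\ p 1%nat = C0 /\ p 2%nat = C1.
Proof.
  intros HA [Hc1 Hmax].
  assert (Hn2 : ~ contact_cond A 2) by (intro H; specialize (Hmax 2%nat H); lia).
  assert (Hf : exists f, A f /\ f 2%nat <> C0).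
  { apply NNPP. intro Hn. apply Hn2. intros f Af jj Hj.
    destruct (Nat.eq_dec jj 1) as [->|].
    - apply Hc1; auto; lia.
    - assert (jj = 2%nat) as -> by lia.
      assert (f 2%nat = C0) as E.
      { apply NNPP. intro Hne. apply Hn. exists f; auto. }
      unfold deriv0. rewrite E. ring. }
  destruct Hf as [f [Af Hf2]].
  assert (Hf1 : f 1%nat = C0) by (rewrite <- deriv0_1; apply Hc1; auto; lia).
  destruct HA as [Hh [H1 [Had [Hsc Hm]]]].
  exists (sscal (Cinv (f 2%nat)) (ssub f (sscal (f 0%nat) sone))).
  split; [|split; [|split]].
  - apply Hsc. apply A_ssub; [repeat split; auto | auto | apply Hsc; auto].
  - unfold sscal, ssub, sone. ring.
  - unfold sscal, ssub, sone. rewrite Hf1. ring.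
  - unfold sscal, ssub, sone. rewrite <- (Cinv_l (f 2%nat)) by auto. ring.
Qed.

Lemma adjust A : unital_subalgebra A -> is_simple A -> forall t, (1 <= t)%nat ->
  exists p, A p /\ p 0%nat = C0 /\ p 1%nat = C0 /\ p 2%nat = C1 /\
    forall k, (2 <= k <= t)%nat -> p (2 * k)%nat = C0.
Proof.
  intros HA Hs. induction t as [|t IH]; intros Ht; [lia|].
  destruct (Nat.eq_dec t 0) as [->|Ht0].
  - destruct (pi0_exists A HA Hs) as [p [Ap [p0 [p1 p2]]]]. exists p. repeat split; auto. intros; lia.
  - destruct (IH ltac:(lia)) as [p [Ap [p0 [p1 [p2 Hp]]]]].
    assert (Hlt2 : forall i, (i < 2)%nat -> p i = C0).
    { intros i Hi. destruct i as [|[|]]; auto; lia. }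
    destruct (spow_order p (S t) Hlt2 p2) as [S1 S2].
    set (c := p (2 * S t)%nat).
    exists (ssub p (sscal c (spow p (S t)))).
    assert (Hkeep : forall i, (i < 2 * S t)%nat -> ssub p (sscal c (spow p (S t))) i = p i).
    { intros i Hi. unfold ssub, sscal. rewrite S1 by auto. ring. }
    split; [|split; [|split; [|split]]].
    + apply A_ssub; auto. apply HA. apply A_spow; auto.
    + rewrite Hkeep by lia. auto.
    + rewrite Hkeep by lia. auto.
    + rewrite Hkeep by lia. auto.
    + intros k Hk. destruct (Nat.eq_dec k (S t)) as [->|].
      * unfold ssub, sscal. rewrite S2. unfold c. ring.
      * rewrite Hkeep by lia. apply Hp. lia.
Qed.

Theorem lemma4p3 (n : nat) (A : series -> Prop) :
  (1 <= n)%nat -> cusp_algebra A -> is_simple A -> has_codim A (S n) ->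
  (exists p : series, is_primitive A p /\
     forall k : nat, (2 <= k <= n)%nat -> p (2 * k)%nat = C0) /\
  (forall p chi : series,
     is_primitive A p -> is_primitive A chi ->
     (forall k : nat, (2 <= k <= n)%nat -> p (2 * k)%nat = C0) ->
     (forall k : nat, (2 <= k <= n)%nat -> chi (2 * k)%nat = C0) ->
     exists h : series, holo h /\ ssub chi p = zpow_mul (2 * n + 2) h).
Proof.
  intros Hn Hcusp Hs Hcod.
  pose proof Hcusp as [HA _].
  split.
  - destruct (adjust A HA Hs n Hn) as [p [Ap [p0 [p1 [p2 Hp]]]]].
    exists p. split; auto. split; [auto|split; auto]. apply deriv0_2; auto.
  - intros p chi [Ap [p0 p2]] [Ac [c0 c2]] Hp Hc.
    apply deriv0_2 in p2. apply deriv0_2 in c2.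
    destruct Hs as [Hc1 _].
    assert (p1 : p 1%nat = C0) by (rewrite <- deriv0_1; apply Hc1; auto; lia).
    assert (Hpi : forall i, (i < 2)%nat -> p i = C0).
    { intros i Hi. destruct i as [|[|]]; auto; lia. }
    set (d := ssub chi p).
    assert (Ad : A d) by (apply A_ssub; auto).
    assert (Hz : forall N, (N <= 2 * n + 2)%nat -> forall i, (i < N)%nat -> d i = C0).
    { induction N as [|N IH]; intros HN i Hi; [lia|].
      destruct (Nat.lt_ge_cases i N) as [Hl|Hge]; [apply IH; auto; lia|].
      assert (i = N) as -> by lia.
      destruct (Nat.Even_or_Odd N) as [[a Ha]|[a Ha]].
      - destruct (Nat.le_gt_cases a 1) as [Ha1|Ha1].
        + destruct a as [|[|]]; try lia; subst N; simpl; unfold d, ssub.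
          * rewrite p0, c0. ring.
          * rewrite p2, c2. ring.
        + subst N. unfold d, ssub. rewrite Hp, Hc by lia. ring.
      - destruct (Nat.eq_dec a 0) as [->|Ha0].
        + subst N. simpl. rewrite <- deriv0_1. apply Hc1; auto; lia.
        + subst N. apply (gap n A p a d Hcusp Hcod Ap Hpi p2 Ad); try lia.
          intros i0 Hi0. apply IH; lia. }
    exists (shift (2 * n + 2) d). split.
    + apply holo_shift. apply HA; auto.
    + apply zpow_shift. apply (Hz (2 * n + 2)%nat). lia.
Qed.
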